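(* Consider two agents with combination matrix $A=\begin{bmatrix}a&1-a\\1-a&a\end{bmatrix}$, $a\in(0,1)$, $P=0.5I_2$, $\overline{A}=(I_2+A)/2$, $V=U\Sigma^{1/2}U^{\mathsf{T}}$ where $(P-AP)/2=U\Sigma U^{\mathsf{T}}$ is an eigendecomposition, and $\mathcal{V}=V\otimes I_M$. Each agent has quadratic cost $\frac12(w^{\mathsf{T}}R_{u,k}w-2r_{du,k}^{\mathsf{T}}w)$ with $R_{u,1}=R_{u,2}=\sigma^2I_M$, and both run EXTRA with step-size $\mu^e$, initialized with $\mathcal{Y}^e_0=\mathcal{V}\mathcal{W}^e_0$. The stacked error $\widetilde{z}^e_i=[\widetilde{\mathcal{W}}^e_i;\widetilde{\mathcal{Y}}^e_i]$ then evolves as $\widetilde{z}^e_i=(Q_e\otimes I_M)\widetilde{z}^e_{i-1}$ with $Q_e=\begin{bmatrix}\overline{A}-\mu^e\sigma^2I_2 & -2V\\ V(\overline{A}-\mu^e\sigma^2I_2) & \overline{A}\end{bmatrix}$. If $\mu^e$ is chosen such that $\mu^e\sigma^2\ge a+1$, then $\widetilde{z}^e_i$ generated by EXTRA diverges.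
   Context: Contrasts with exact diffusion in the same two-agent setting, which is stable for $0<\mu\sigma^2<2$; since $1+a<2$, exact diffusion has a larger stability range. *)

(* Defs.v *)
(* matrices over an abstract R : realType;
   Kronecker product = tensmx (A *t B) from mathcomp-real-closed's mxtens. *)
From HB Require Import structures.
From mathcomp Require Import all_boot all_order all_algebra.
From mathcomp Require Import reals.
From mathcomp.real_closed Require Export mxtens.
Set Implicit Arguments. Unset Strict Implicit. Unset Printing Implicit Defensive.
Import Order.TTheory GRing.Theory Num.Theory.
Local Open Scope ring_scope.

Section Defs.
Variable R : realType.

Definition Amat (a : R) : 'M[R]_2 :=
  \matrix_(i < 2, j < 2) (if i == j then a else 1 - a).

Definition Pmat : 'M[R]_2 := (2^-1 : R)%:M.

Definition Abar (a : R) : 'M[R]_2 := 2^-1 *: (1%:M + Amat a).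

Definition PAP (a : R) : 'M[R]_2 := 2^-1 *: (Pmat - Amat a *m Pmat).

Definition Vmat (U Sig : 'M[R]_2) : 'M[R]_2 :=
  U *m diag_mx (\row_i Num.sqrt (Sig i i)) *m U^T.

Definition Qe (a mu sigma : R) (V : 'M[R]_2) : 'M[R]_(2 + 2) :=
  block_mx (Abar a - (mu * sigma ^+ 2)%:M) (- (2 : R) *: V)
           (V *m (Abar a - (mu * sigma ^+ 2)%:M)) (Abar a).

Definition extra_err (M : nat) (Q : 'M[R]_(2 + 2)) (z0 : 'cV[R]_((2 + 2) * M))
  (i : nat) : 'cV[R]_((2 + 2) * M) :=
  iter i (fun z => (Q *t (1%:M : 'M[R]_M)) *m z) z0.

Definition stack (M : nat) (W Y : 'cV[R]_(2 * M)) : 'cV[R]_((2 + 2) * M) :=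
  castmx (esym (mulnDl 2 2 M), erefl) (col_mx W Y).

Definition diverges (n : nat) (z : nat -> 'cV[R]_n) : Prop :=
  forall B : R, exists i (k : 'I_n), B < `|z i k 0|.

End Defs.

(* Main.v *)
Require Import Defs.
From HB Require Import structures.
From mathcomp Require Import all_boot all_order all_algebra.
From mathcomp Require Import reals.
From mathcomp Require Import ring lra zify.
Import Order.TTheory GRing.Theory Num.Theory.
Local Open Scope ring_scope.

Section S.
Variable R : realType.
Implicit Types a : R.

Definition ev : 'cV[R]_2 := \col_i (if (i : nat) == 0%N then 1 else -1).

Ltac ix i := case: i => [[|[|//]] ?].

Lemma PAPE a (i j : 'I_2) : PAP a i j = (1 - a) / 4 * (if (i : nat) == j then 1 else -1).
Proof.
rewrite /PAP /Pmat !mxE !big_ord_recr big_ord0 /= !mxE.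
ix i; ix j; rewrite /= ?mulr1n ?mulr0n; by field.
Qed.

Lemma AbarE a : Abar a = 1%:M - 2 *: PAP a.
Proof.
apply/matrixP => i j; rewrite /Abar /PAP /Pmat !mxE !big_ord_recr big_ord0 /= !mxE.
ix i; ix j; rewrite /= ?mulr1n ?mulr0n; by field.
Qed.

Lemma PAPev a : PAP a *m ev = ((1 - a) / 2) *: ev.
Proof.
apply/matrixP => i j; rewrite !mxE !big_ord_recr big_ord0 /= !PAPE !mxE.
ix i; rewrite /=; by field.
Qed.

Lemma Abarev a : Abar a *m ev = a *: ev.
Proof.
rewrite AbarE mulmxBl mul1mx -scalemxAl PAPev scalerA -{1}(scale1r ev) -scalerBl.
congr (_ *: _); by field.
Qed.

Lemma VV a (U Sig : 'M[R]_2) :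
  U^T *m U = 1%:M -> is_diag_mx Sig -> PAP a = U *m Sig *m U^T -> a < 1 ->
  Vmat U Sig *m Vmat U Sig = PAP a.
Proof.
move=> HU /is_diag_mxP Hd HP Ha.
have UUt : U *m U^T = 1%:M by apply: mulmx1C.
have HS : Sig = U^T *m PAP a *m U.
  by rewrite HP !mulmxA HU mul1mx -!mulmxA HU mulmx1.
have Spos : forall i, 0 <= Sig i i.
  move=> i; rewrite HS !(mxE, big_ord_recl, big_ord0, PAPE) /=.
  set u0 := U ord0 i; set u1 := U _ i.
  have h : 0 <= (1 - a) / 4 * ((u0 - u1) ^+ 2) by apply: mulr_ge0; [lra| apply: sqr_ge0].
  rewrite ?mulr1n ?mulr0n; nra.
rewrite /Vmat; set D := diag_mx _.
rewrite !mulmxA -[U *m D *m U^T *m U]mulmxA HU mulmx1 -(mulmxA U D D) mulmx_diag HP.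
congr (_ *m _ *m _); apply/matrixP => i j; rewrite !mxE.
have [->|nij] := eqVneq i j.
  by rewrite mulr1n -expr2 sqr_sqrtr.
by rewrite mulr0n Hd.
Qed.

Lemma bern (d : R) n : 0 <= d -> 1 + n%:R * d <= (1 + d) ^+ n.
Proof.
move=> hd; elim: n => [|n IH]; first by rewrite expr0 mul0r addr0.
rewrite exprS -natr1 (mulrC (1+d)).
have h : 0 <= n%:R * d * d by apply: mulr_ge0 => //; apply: mulr_ge0.
have h1 : 0 <= 1 + d by lra.
have := ler_wpM2r h1 IH.
nra.
Qed.
Lemma Qstep a mu sigma (U Sig : 'M[R]_2) (al be : R) :
  U^T *m U = 1%:M -> is_diag_mx Sig -> PAP a = U *m Sig *m U^T -> a < 1 ->
  let V := Vmat U Sig in let c := mu * sigma ^+ 2 in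
  Qe a mu sigma V *m col_mx (al *: ev) (be *: (V *m ev)) =
  col_mx (((a - c) * al - (1 - a) * be) *: ev) (((a - c) * al + a * be) *: (V *m ev)).
Proof.
move=> HU Hd HP Ha V c.
have HVV : V *m V = PAP a by apply: VV.
have H1 : V *m (V *m ev) = ((1-a)/2) *: ev by rewrite mulmxA HVV PAPev.
have H2 : Abar a *m (V *m ev) = a *: (V *m ev).
  rewrite AbarE -HVV mulmxBl mul1mx -scalemxAl -(mulmxA V V) H1 -scalemxAr.
  move: (V *m ev) => w; apply/matrixP => i j; rewrite !mxE. move: (w i j) => t; by field.
rewrite /Qe mul_block_col; congr col_mx.
  rewrite mulmxBl mul_scalar_mx -!scalemxAr Abarev -scalemxAl H1.
  rewrite /c; move: (V *m ev) => w; set e := ev; clearbody e; apply/matrixP => i j; rewrite !mxE; move: (w i j) (e i j) => t t2; by field.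
rewrite -mulmxA mulmxBl mul_scalar_mx -!scalemxAr Abarev H2.
rewrite mulmxBr -!scalemxAr.
rewrite /c; move: (V *m ev) => w; set e := ev; clearbody e; apply/matrixP => i j; rewrite !mxE; move: (w i j) (e i j) => t t2; by field.
Qed.
End S.
Lemma stack_tens (R : realType) M (p q : 'cV[R]_2) (x : 'cV[R]_M) :
  stack (p *t x) (q *t x) = (col_mx p q) *t x.
Proof.
apply/matrixP=> i j.
have -> : j = (mxtens_index (ord0 : 'I_1, ord0 : 'I_1) : 'I_1) by rewrite [j]ord1; apply: val_inj.
case: (mxtens_indexP i)=> i0 i1.
rewrite /stack castmxE /= cast_ord_id [in RHS]mxE !mxtens_indexK /= mxE.
rewrite [col_mx p q _ _]mxE.
set s := cast_ord _ _; case: (splitP s) => k /= hk; case: (mxtens_indexP k) hk => k0 k1 /= hk;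
  rewrite mxE !mxtens_indexK /=.
- case: (splitP i0) => i0' /= hi0'.
  + move: hk; rewrite hi0' => /(f_equal (edivn^~ M)).
    rewrite !edivn_eq // => [] [h0 h1].
    by congr (p _ _ * x _ _); apply: val_inj; rewrite /= ?h0 ?h1.
  + exfalso; move: (ltn_ord k0) (ltn_ord k1) (ltn_ord i1) hk; rewrite hi0' /=; nia.
- case: (splitP i0) => i0' /= hi0'.
  + exfalso; move: (ltn_ord i0') (ltn_ord k1) (ltn_ord i1) hk; rewrite hi0' /=; nia.
  + move: hk; rewrite hi0' mulnDl -addnA=> /addnI /(f_equal (edivn^~ M)).
    rewrite !edivn_eq // => [] [h0 h1].
    by congr (q _ _ * x _ _); apply: val_inj; rewrite /= ?h0 ?h1.
Qed.

Lemma tmul (R : realType) (m n M : nat) (A : 'M[R]_(m,n)) (B : 'M[R]_M) (v : 'cV[R]_n) (x : 'cV[R]_M) :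
  (A *t B) *m (v *t x : 'cV_(n*M)) = ((A *m v) *t (B *m x) : 'cV_(m*M)).
Proof. exact: (@tensmx_mul R m n M M 1 1 A B v x). Qed.

Theorem lemma7 (R : realType) (M : nat) (a sigma mu : R) (U Sig : 'M[R]_2) :
  (0 < M)%N -> 0 < a < 1 -> 0 < sigma -> 0 < mu ->
  U^T *m U = 1%:M -> is_diag_mx Sig -> PAP a = U *m Sig *m U^T ->
  a + 1 <= mu * sigma ^+ 2 ->
  let V := Vmat U Sig in
  let Vcal := V *t (1%:M : 'M[R]_M) in
  exists (W0 Y0 : 'cV[R]_(2 * M)),
    diverges (extra_err (Qe a mu sigma V) (stack W0 (Vcal *m Y0))).
Proof.
move=> HM /andP[a0 a1] s0 m0 HU Hd HP Hc V Vcal.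
set c := mu * sigma ^+ 2 in Hc.
set disc := (2 * a - c) ^+ 2 - 4 * (a - c).
have disc0 : 0 <= disc by rewrite /disc; nra.
set s := Num.sqrt disc.
have s0' : 0 <= s by apply: sqrtr_ge0.
have ss : s * s = disc by rewrite -expr2 sqr_sqrtr.
set l := ((2 * a - c) - s) / 2.
have hl : l * l = (2 * a - c) * l - (a - c).
  rewrite /l; move: ss; rewrite /disc => ss; nra.
have hlt : l < -1.
  have : 2 * a - c + 2 < s.
    case: (ltrP (2 * a - c + 2) 0) => h; first lra.
    rewrite -(ltr_pXn2r (n:=2)) //.
    rewrite [s ^+ 2]expr2 ss /disc; nra.
  rewrite /l; lra.
set al := 1 - a; set be := a - c - l.
pose x : 'cV[R]_M := const_mx 1.
exists ((al *: ev R) *t x), ((be *: ev R) *t x).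
have Hz : forall i, extra_err (Qe a mu sigma V) (stack ((al *: ev R) *t x) (Vcal *m ((be *: ev R) *t x))) i
   = col_mx ((l ^+ i * al) *: ev R) ((l ^+ i * be) *: (V *m ev R)) *t x.
  elim => [|i IH].
    rewrite /= /Vcal tmul mul1mx stack_tens !expr0 !mul1r.
    by rewrite scalemxAr.
  rewrite /extra_err iterS -/(extra_err _ _ i) IH tmul mul1mx Qstep //.
  rewrite -/V -/c.
  have k1 : (a - c) * al - (1 - a) * be = l * al by rewrite /al /be; ring.
  have k2 : (a - c) * al + a * be = l * be by rewrite /al /be; lra.
  have -> : (a - c) * (l ^+ i * al) - (1 - a) * (l ^+ i * be) = l ^+ i.+1 * al.
    rewrite exprS; transitivity (l ^+ i * ((a - c) * al - (1 - a) * be)); [ring | rewrite k1; ring].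
  have -> : (a - c) * (l ^+ i * al) + a * (l ^+ i * be) = l ^+ i.+1 * be.
    rewrite exprS; transitivity (l ^+ i * ((a - c) * al + a * be)); [ring | rewrite k2; ring].
  by [].
move=> B.
have d0 : 0 < `|l| - 1 by rewrite ltr0_norm; lra.
have al0 : 0 < al by rewrite /al; lra.
set n := Num.Def.archi_bound (`|B| / (al * (`|l| - 1))).
have hn : `|B| / (al * (`|l| - 1)) < n%:R.
  by apply: archi_boundP; apply: divr_ge0 => //; apply: mulr_ge0; lra.
exists n, (mxtens_index ((ord0 : 'I_(2+2)), Ordinal HM)).
rewrite Hz mxE mxtens_indexK /=.
have -> : (ord0 : 'I_(2+2)) = lshift 2 (ord0 : 'I_2) by apply: val_inj.
rewrite col_mxEu !mxE /= mulr1 mulr1.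
rewrite normrM normrX (gtr0_norm al0).
have hb := @bern R (`|l| - 1) n (ltW d0).
rewrite addrCA subrr addr0 in hb.
have hB : B <= `|B| by apply: ler_norm.
rewrite ltr_pdivrMr in hn; last by apply: mulr_gt0.
have : n%:R * (al * (`|l| - 1)) <= `|l| ^+ n * al.
  have : 0 <= n%:R * (`|l| - 1) by apply: mulr_ge0 => //; lra.
  nra.
lra.
Qed.
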